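(* There is an equivalence of categories $\mathbf{Poly}_{\ulcorner}\simeq\mathbf{Dir}_{\ulcorner}$ between the category of polynomial functors with cartesian natural transformations and the category of Dirichlet functors with cartesian natural transformations. This equivalence sends each representable $(-)^N$ to the contravariant representable $N^{(-)}$.
   Context: A polynomial functor is a functor $\mathbf{Set}\to\mathbf{Set}$ of the form $X\mapsto\sum_{b\in B}X^{E_b}$ (a sum of covariant representables). A Dirichlet functor is a functor $D:\mathbf{Set}^{op}\to\mathbf{Set}$ preserving connected limits (equivalently, of the form $X\mapsto\sum_{b\in B}E_b^X$). A natural transformation is cartesian if all its naturality squares are pullbacks. $\mathbf{Poly}_{\ulcorner}$ (resp. $\mathbf{Dir}_{\ulcorner}$) has polynomial (resp. Dirichlet) functors as objects and cartesian natural transformations as morphisms. *)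

(* Defs.v *)
From Stdlib Require Import Logic.FunctionalExtensionality.

(* The universe of "sets": a single fixed universe, used both for the
   argument sets X and for the summand data B, E_b. *)
Definition U := Type.

Record PolyObj : Type := { pB : U ; pE : pB -> U }.

Definition polyF (p : PolyObj) (X : U) : U := { b : pB p & pE p b -> X }.

Definition polyMap (p : PolyObj) {X Y : U} (f : X -> Y) (x : polyF p X)
  : polyF p Y := existT _ (projT1 x) (fun e => f (projT2 x e)).

(* Cartesian natural transformations between polynomial functors:
   naturality, and every naturality square is a pullback in Set. *)
Record PolyHom (p q : PolyObj) : Type := {
  pcomp : forall X : U, polyF p X -> polyF q X ;
  pnat : forall (X Y : U) (f : X -> Y) (x : polyF p X),
      pcomp Y (polyMap p f x) = polyMap q f (pcomp X x) ;
  pcart : forall (X Y : U) (f : X -> Y) (q0 : polyF q X) (p1 : polyF p Y),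
      polyMap q f q0 = pcomp Y p1 ->
      exists! p0 : polyF p X, pcomp X p0 = q0 /\ polyMap p f p0 = p1 }.
Arguments pcomp {p q} _ _ _.

Definition poly_heq {p q} (a b : PolyHom p q) : Prop :=
  forall (X : U) (x : polyF p X), pcomp a X x = pcomp b X x.

Definition poly_id (p : PolyObj) : PolyHom p p.
Proof.
  refine {| pcomp := fun X x => x |}.
  - reflexivity.
  - intros X Y f q0 p1 H. exists q0. split; [split; auto|].
    intros y [Hy _]; auto.
Defined.

Definition poly_comp {p q r} (b : PolyHom q r) (a : PolyHom p q) : PolyHom p r.
Proof.
  refine {| pcomp := fun X x => pcomp b X (pcomp a X x) |}.
  - intros X Y f x. rewrite (pnat _ _ a), (pnat _ _ b). reflexivity.
  - intros X Y f r0 p1 H.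
    destruct (pcart _ _ b X Y f r0 (pcomp a Y p1) H) as [m [[Hm1 Hm2] Hmu]].
    destruct (pcart _ _ a X Y f m p1 Hm2) as [p0 [[Hp1 Hp2] Hpu]].
    exists p0. split; [split; [rewrite Hp1; exact Hm1 | exact Hp2]|].
    intros p0' [H1 H2]. apply Hpu. split; auto.
    symmetry. apply Hmu. split; auto. rewrite <- (pnat _ _ a), H2. reflexivity.
Defined.

Record DirObj : Type := { dB : U ; dE : dB -> U }.

Definition dirF (d : DirObj) (X : U) : U := { b : dB d & X -> dE d b }.

Definition dirMap (d : DirObj) {X Y : U} (f : X -> Y) (y : dirF d Y)
  : dirF d X := existT _ (projT1 y) (fun x => projT2 y (f x)).

Record DirHom (d d' : DirObj) : Type := {
  dcomp : forall X : U, dirF d X -> dirF d' X ;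
  dnat : forall (X Y : U) (f : X -> Y) (y : dirF d Y),
      dcomp X (dirMap d f y) = dirMap d' f (dcomp Y y) ;
  dcart : forall (X Y : U) (f : X -> Y) (q : dirF d' Y) (p : dirF d X),
      dirMap d' f q = dcomp X p ->
      exists! p' : dirF d Y, dcomp Y p' = q /\ dirMap d f p' = p }.
Arguments dcomp {d d'} _ _ _.

Definition dir_heq {d d'} (a b : DirHom d d') : Prop :=
  forall (X : U) (x : dirF d X), dcomp a X x = dcomp b X x.

Definition dir_id (d : DirObj) : DirHom d d.
Proof.
  refine {| dcomp := fun X x => x |}.
  - reflexivity.
  - intros X Y f q p H. exists q. split; [split; auto|].
    intros y [Hy _]; auto.
Defined.

Definition dir_comp {d e g} (b : DirHom e g) (a : DirHom d e) : DirHom d g.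
Proof.
  refine {| dcomp := fun X x => dcomp b X (dcomp a X x) |}.
  - intros X Y f y. rewrite (dnat _ _ a), (dnat _ _ b). reflexivity.
  - intros X Y f r p H.
    destruct (dcart _ _ b X Y f r (dcomp a X p) H) as [m [[Hm1 Hm2] Hmu]].
    destruct (dcart _ _ a X Y f m p Hm2) as [p' [[Hp1 Hp2] Hpu]].
    exists p'. split; [split; [rewrite Hp1; exact Hm1 | exact Hp2]|].
    intros p'' [H1 H2]. apply Hpu. split; auto.
    symmetry. apply Hmu. split; auto. rewrite <- (dnat _ _ a), H2. reflexivity.
Defined.

Definition dir_iso (d d' : DirObj) : Prop :=
  exists (a : DirHom d d') (b : DirHom d' d),
    dir_heq (dir_comp b a) (dir_id d) /\ dir_heq (dir_comp a b) (dir_id d').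

Record PolyDirFunctor : Type := {
  Fob : PolyObj -> DirObj ;
  Fhom : forall p q, PolyHom p q -> DirHom (Fob p) (Fob q) ;
  Fresp : forall p q (a b : PolyHom p q),
      poly_heq a b -> dir_heq (Fhom p q a) (Fhom p q b) ;
  Fid : forall p, dir_heq (Fhom p p (poly_id p)) (dir_id (Fob p)) ;
  Fcomp : forall p q r (a : PolyHom p q) (b : PolyHom q r),
      dir_heq (Fhom p r (poly_comp b a))
              (dir_comp (Fhom q r b) (Fhom p q a)) }.

Definition is_equivalence (F : PolyDirFunctor) : Prop :=
  (forall p q (a b : PolyHom p q),
      dir_heq (Fhom F p q a) (Fhom F p q b) -> poly_heq a b) /\
  (forall p q (g : DirHom (Fob F p) (Fob F q)),
      exists a : PolyHom p q, dir_heq (Fhom F p q a) g) /\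
  (forall d : DirObj, exists p : PolyObj, dir_iso (Fob F p) d).

Definition poly_rep (N : U) : PolyObj := {| pB := unit ; pE := fun _ => N |}.
Definition dir_rep (N : U) : DirObj := {| dB := unit ; dE := fun _ => N |}.

(* Main.v *)
Require Import Defs.
From Stdlib Require Import FunctionalExtensionality ClassicalEpsilon Eqdep.

Definition inj {A B : Type} (s : A -> B) := forall x x', s x = s x' -> x = x'.
Definition surj {A B : Type} (s : A -> B) := forall y, exists x, s x = y.

Definition binv {A B : Type} (s : A -> B) (H : surj s) (y : B) : A :=
  proj1_sig (constructive_indefinite_description _ (H y)).

Lemma binv_r {A B : Type} (s : A -> B) H y : s (binv s H y) = y.
Proof. unfold binv. destruct (constructive_indefinite_description _ _); auto. Qed.

Lemma binv_l {A B : Type} (s : A -> B) H : inj s -> forall x, binv s H (s x) = x.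
Proof. intros Hi x. apply Hi. apply binv_r. Qed.

Lemma binv_inj {A B : Type} (s : A -> B) H : inj (binv s H).
Proof. intros x x' E. rewrite <- (binv_r s H x), <- (binv_r s H x'), E. reflexivity. Qed.

Lemma binv_surj {A B : Type} (s : A -> B) H : inj s -> surj (binv s H).
Proof. intros Hi x. exists (s x). apply binv_l; auto. Qed.

Lemma sigT_eta {A : Type} {P : A -> Type} (z : sigT P) : z = existT _ (projT1 z) (projT2 z).
Proof. destruct z; reflexivity. Qed.

Definition DirOf (d d' : DirObj) (g : dB d -> dB d') (t : forall b, dE d b -> dE d' (g b))
  (Hi : forall b, inj (t b)) (Hs : forall b, surj (t b)) : DirHom d d'.
Proof.
  refine {| dcomp := fun X x => existT _ (g (projT1 x)) (fun e => t (projT1 x) (projT2 x e)) |}.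
  - intros X Y f y. reflexivity.
  - intros X Y f q p H. destruct q as [b' k]; destruct p as [b h].
    simpl in H.
    assert (E := f_equal (@projT1 _ _) H); simpl in E; subst b'.
    apply inj_pair2 in H.
    exists (existT _ b (fun y => binv (t b) (Hs b) (k y))). split; [split|].
    + simpl. f_equal. extensionality y. apply binv_r.
    + unfold dirMap; simpl. f_equal. extensionality x.
      pose proof (equal_f H x) as Hx. simpl in Hx. rewrite Hx. apply binv_l; auto.
    + intros [b2 h2] [H1 H2]. unfold dirMap in H2; simpl in H1, H2.
      assert (E := f_equal (@projT1 _ _) H2); simpl in E; subst b2.
      apply inj_pair2 in H1. f_equal. extensionality y. rewrite <- H1.
      apply binv_l; auto.
Defined.

Definition PolyOf (p q : PolyObj) (f : pB p -> pB q) (s : forall b, pE q (f b) -> pE p b)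
  (Hi : forall b, inj (s b)) (Hs : forall b, surj (s b)) : PolyHom p q.
Proof.
  refine {| pcomp := fun X x => existT _ (f (projT1 x)) (fun e => projT2 x (s (projT1 x) e)) |}.
  - intros X Y f0 x. reflexivity.
  - intros X Y f0 q0 p1 H. destruct q0 as [b' k]; destruct p1 as [b h].
    unfold polyMap in H; simpl in H.
    assert (E := f_equal (@projT1 _ _) H); simpl in E; subst b'.
    apply inj_pair2 in H.
    exists (existT _ b (fun e => k (binv (s b) (Hs b) e))). split; [split|].
    + simpl. f_equal. extensionality e. rewrite binv_l; auto.
    + unfold polyMap; simpl. f_equal. extensionality e.
      rewrite (equal_f H). rewrite binv_r. reflexivity.
    + intros [b2 k2] [H1 H2]. unfold polyMap in H2; simpl in H1, H2.
      assert (E := f_equal (@projT1 _ _) H2); simpl in E; subst b2.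
      apply inj_pair2 in H1. f_equal. extensionality e. rewrite <- H1.
      rewrite binv_r. reflexivity.
Defined.

Definition pf {p q} (a : PolyHom p q) (b : pB p) : pB q :=
  projT1 (pcomp a (pE p b) (existT _ b (fun e => e))).
Definition ps {p q} (a : PolyHom p q) (b : pB p) : pE q (pf a b) -> pE p b :=
  projT2 (pcomp a (pE p b) (existT _ b (fun e => e))).

Lemma prep {p q} (a : PolyHom p q) X b (h : pE p b -> X) :
  pcomp a X (existT _ b h) = existT _ (pf a b) (fun e => h (ps a b e)).
Proof. exact (pnat _ _ a (pE p b) X h (existT _ b (fun e => e))). Qed.

Lemma ps_bij {p q} (a : PolyHom p q) b :
  exists k, (forall e, k (ps a b e) = e) /\ (forall x, ps a b (k x) = x).
Proof.
  assert (H : polyMap q (ps a b) (existT _ (pf a b) (fun e => e))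
              = pcomp a (pE p b) (existT _ b (fun e => e))).
  { symmetry. exact (prep a _ b (fun e => e)). }
  destruct (pcart _ _ a _ _ (ps a b) _ _ H) as [[b0 k] [[H1 H2] _]].
  unfold polyMap in H2; simpl in H2.
  assert (E := f_equal (@projT1 _ _) H2); simpl in E; subst b0.
  apply inj_pair2 in H2. rewrite prep in H1. apply inj_pair2 in H1.
  exists k. split; intros; [exact (equal_f H1 _) | exact (equal_f H2 _)].
Qed.

Lemma ps_inj {p q} (a : PolyHom p q) b : inj (ps a b).
Proof. destruct (ps_bij a b) as [k [H1 H2]]. intros x x' E.
  rewrite <- (H1 x), <- (H1 x'), E. reflexivity. Qed.
Lemma ps_surj {p q} (a : PolyHom p q) b : surj (ps a b).
Proof. destruct (ps_bij a b) as [k [H1 H2]]. intros y. exists (k y). auto. Qed.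

Definition dg {d d'} (a : DirHom d d') (b : dB d) : dB d' :=
  projT1 (dcomp a (dE d b) (existT _ b (fun e => e))).
Definition dt {d d'} (a : DirHom d d') (b : dB d) : dE d b -> dE d' (dg a b) :=
  projT2 (dcomp a (dE d b) (existT _ b (fun e => e))).

Lemma drep {d d'} (a : DirHom d d') X b (h : X -> dE d b) :
  dcomp a X (existT _ b h) = existT _ (dg a b) (fun x => dt a b (h x)).
Proof. exact (dnat _ _ a X (dE d b) h (existT _ b (fun e => e))). Qed.

Lemma dt_bij {d d'} (a : DirHom d d') b :
  exists k, (forall e, k (dt a b e) = e) /\ (forall x, dt a b (k x) = x).
Proof.
  assert (H : dirMap d' (dt a b) (existT _ (dg a b) (fun e => e))
              = dcomp a (dE d b) (existT _ b (fun e => e))).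
  { symmetry. exact (drep a _ b (fun e => e)). }
  destruct (dcart _ _ a _ _ (dt a b) _ _ H) as [[b0 k] [[H1 H2] _]].
  unfold dirMap in H2; simpl in H2.
  assert (E := f_equal (@projT1 _ _) H2); simpl in E; subst b0.
  apply inj_pair2 in H2. rewrite drep in H1. apply inj_pair2 in H1.
  exists k. split; intros; [exact (equal_f H2 _) | exact (equal_f H1 _)].
Qed.

Lemma dt_inj {d d'} (a : DirHom d d') b : inj (dt a b).
Proof. destruct (dt_bij a b) as [k [H1 H2]]. intros x x' E.
  rewrite <- (H1 x), <- (H1 x'), E. reflexivity. Qed.
Lemma dt_surj {d d'} (a : DirHom d d') b : surj (dt a b).
Proof. destruct (dt_bij a b) as [k [H1 H2]]. intros y. exists (k y). auto. Qed.

Lemma swap_eq {C : Type} {F : C -> Type} {E : Type} c1 c2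
  (s1 : F c1 -> E) (s2 : F c2 -> E) (i1 : E -> F c1) (i2 : E -> F c2) :
  (forall x, i1 (s1 x) = x) -> (forall y, s1 (i1 y) = y) ->
  (forall x, i2 (s2 x) = x) -> (forall y, s2 (i2 y) = y) ->
  existT (fun c => F c -> E) c1 s1 = existT _ c2 s2 ->
  existT (fun c => E -> F c) c1 i1 = existT _ c2 i2.
Proof.
  intros Hi1 Hs1 Hi2 Hs2 H.
  assert (Ec := f_equal (@projT1 _ _) H); simpl in Ec; subst c2.
  apply inj_pair2 in H. subst s2. f_equal. extensionality y.
  rewrite <- (Hs2 y) at 1. apply Hi1.
Qed.

Lemma swap_eq2 {C : Type} {F : C -> Type} {E : Type} c1 c2
  (s1 : F c1 -> E) (s2 : F c2 -> E) (i1 : E -> F c1) (i2 : E -> F c2) :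
  (forall x, i1 (s1 x) = x) -> (forall y, s1 (i1 y) = y) ->
  (forall x, i2 (s2 x) = x) -> (forall y, s2 (i2 y) = y) ->
  existT (fun c => E -> F c) c1 i1 = existT _ c2 i2 ->
  existT (fun c => F c -> E) c1 s1 = existT _ c2 s2.
Proof.
  intros Hi1 Hs1 Hi2 Hs2 H.
  assert (Ec := f_equal (@projT1 _ _) H); simpl in Ec; subst c2.
  apply inj_pair2 in H. subst i2. f_equal. extensionality y.
  rewrite <- (Hi2 y) at 1. apply Hs1.
Qed.

Lemma post_compose {C : Type} {F : C -> Type} {E X : Type} c1 c2
  (i1 : E -> F c1) (i2 : E -> F c2) (h : X -> E) :
  existT (fun c => E -> F c) c1 i1 = existT _ c2 i2 ->
  existT (fun c => X -> F c) c1 (fun x => i1 (h x)) = existT _ c2 (fun x => i2 (h x)).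
Proof.
  intros H. assert (Ec := f_equal (@projT1 _ _) H); simpl in Ec; subst c2.
  apply inj_pair2 in H. subst i2. reflexivity.
Qed.

Lemma pre_compose {C : Type} {F : C -> Type} {E X : Type} c1 c2
  (s1 : F c1 -> E) (s2 : F c2 -> E) (h : E -> X) :
  existT (fun c => F c -> E) c1 s1 = existT _ c2 s2 ->
  existT (fun c => F c -> X) c1 (fun e => h (s1 e)) = existT _ c2 (fun e => h (s2 e)).
Proof.
  intros H. assert (Ec := f_equal (@projT1 _ _) H); simpl in Ec; subst c2.
  apply inj_pair2 in H. subst s2. reflexivity.
Qed.

Definition Fob0 (p : PolyObj) : DirObj := {| dB := pB p ; dE := pE p |}.

Definition Fhom0 (p q : PolyObj) (a : PolyHom p q) : DirHom (Fob0 p) (Fob0 q) :=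
  DirOf (Fob0 p) (Fob0 q) (pf a) (fun b => binv (ps a b) (ps_surj a b))
    (fun b => binv_inj _ _) (fun b => binv_surj _ _ (ps_inj a b)).

Lemma Fhom_val p q (a : PolyHom p q) X b (h : X -> pE p b) :
  dcomp (Fhom0 p q a) X (existT _ b h)
  = existT (fun c => X -> pE q c) (pf a b) (fun x => binv (ps a b) (ps_surj a b) (h x)).
Proof. reflexivity. Qed.

Lemma Fresp0 p q (a b : PolyHom p q) : poly_heq a b -> dir_heq (Fhom0 p q a) (Fhom0 p q b).
Proof.
  intros Hab X [b0 h]. rewrite !Fhom_val.
  assert (E := Hab _ (existT _ b0 (fun e => e))). rewrite (prep a), (prep b) in E.
  assert (E' := swap_eq (F := pE q) (E := pE p b0) _ _ (ps a b0) (ps b b0)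
     (binv (ps a b0) (ps_surj a b0)) (binv (ps b b0) (ps_surj b b0))
     (binv_l _ _ (ps_inj a b0)) (binv_r _ _) (binv_l _ _ (ps_inj b b0)) (binv_r _ _) E).
  exact (post_compose _ _ _ _ h E').
Qed.

Lemma Fid0 p : dir_heq (Fhom0 p p (poly_id p)) (dir_id (Fob0 p)).
Proof.
  intros X [b h]. rewrite Fhom_val. simpl.
  apply (f_equal (existT _ b)). extensionality x.
  exact (binv_r (ps (poly_id p) b) (ps_surj (poly_id p) b) (h x)).
Qed.

Lemma Fcomp0 p q r (a : PolyHom p q) (b : PolyHom q r) :
  dir_heq (Fhom0 p r (poly_comp b a)) (dir_comp (Fhom0 q r b) (Fhom0 p q a)).
Proof.
  intros X [b0 h]. rewrite Fhom_val.
  change (dcomp (dir_comp (Fhom0 q r b) (Fhom0 p q a)) X (existT _ b0 h))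
    with (dcomp (Fhom0 q r b) X (dcomp (Fhom0 p q a) X (existT _ b0 h))).
  rewrite Fhom_val, Fhom_val.
  assert (E : existT (fun c => pE r c -> pE p b0) (pf (poly_comp b a) b0) (ps (poly_comp b a) b0)
     = existT _ (pf b (pf a b0)) (fun e => ps a b0 (ps b (pf a b0) e))).
  { transitivity (pcomp b (pE p b0) (pcomp a (pE p b0) (existT _ b0 (fun e => e)))).
    - symmetry. exact (sigT_eta _).
    - rewrite (prep a). rewrite (prep b). reflexivity. }
  assert (L1 : forall x, binv (ps b (pf a b0)) (ps_surj b _) (binv (ps a b0) (ps_surj a b0)
        (ps a b0 (ps b (pf a b0) x))) = x).
  { intros x. rewrite binv_l by apply ps_inj. rewrite binv_l by apply ps_inj. reflexivity. }
  assert (L2 : forall y, ps a b0 (ps b (pf a b0) (binv (ps b (pf a b0)) (ps_surj b _)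
        (binv (ps a b0) (ps_surj a b0) y))) = y).
  { intros y. rewrite binv_r. rewrite binv_r. reflexivity. }
  assert (E' := swap_eq (F := pE r) (E := pE p b0) _ _ _ _
     (binv (ps (poly_comp b a) b0) (ps_surj _ b0))
     (fun x => binv (ps b (pf a b0)) (ps_surj b _) (binv (ps a b0) (ps_surj a b0) x))
     (binv_l _ _ (ps_inj _ b0)) (binv_r _ _) L1 L2 E).
  exact (post_compose _ _ _ _ h E').
Qed.

Definition F0 : PolyDirFunctor :=
  {| Fob := Fob0 ; Fhom := Fhom0 ; Fresp := Fresp0 ; Fid := Fid0 ; Fcomp := Fcomp0 |}.

Lemma id_inj {A : Type} : inj (fun e : A => e). Proof. intros x y H; exact H. Qed.
Lemma id_surj {A : Type} : surj (fun e : A => e). Proof. intros y; exists y; reflexivity. Qed.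

Theorem theorem3p2 :
  exists F : PolyDirFunctor,
    is_equivalence F /\
    forall N : U, dir_iso (Fob F (poly_rep N)) (dir_rep N).
Proof.
  exists F0. split; [split; [|split]|].
  - intros p q a b H X [b0 h].
    assert (E := H (pE p b0) (existT _ b0 (fun e => e))).
    assert (E' := swap_eq2 (F := pE q) (E := pE p b0) _ _ (ps a b0) (ps b b0)
     (binv (ps a b0) (ps_surj a b0)) (binv (ps b b0) (ps_surj b b0))
     (binv_l _ _ (ps_inj a b0)) (binv_r _ _) (binv_l _ _ (ps_inj b b0)) (binv_r _ _) E).
    rewrite (prep a), (prep b). exact (pre_compose _ _ _ _ h E').
  - intros p q g.
    exists (PolyOf p q (dg g) (fun b => binv (dt g b) (dt_surj g b))
             (fun b => binv_inj _ _) (fun b => binv_surj _ _ (dt_inj g b))).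
    intros X [b h]. simpl Fhom. rewrite Fhom_val. rewrite drep.
    apply (f_equal (existT _ (dg g b))). extensionality x.
    match goal with |- binv ?s ?H ?y = _ => pose proof (binv_r s H y) as Hw;
      set (w := binv s H y) in * end.
    change (binv (dt g b) (dt_surj g b) w = h x) in Hw.
    rewrite <- Hw. symmetry. apply binv_r.
  - intros d. exists {| pB := dB d ; pE := dE d |}.
    exists (DirOf (Fob0 {| pB := dB d ; pE := dE d |}) d (fun b => b) (fun b e => e) (fun b => id_inj) (fun b => id_surj)).
    exists (DirOf d (Fob0 {| pB := dB d ; pE := dE d |}) (fun b => b) (fun b e => e)
              (fun b => id_inj) (fun b => id_surj)).
    split; intros X [b h]; reflexivity.
  - intros N.
    exists (DirOf (Fob0 (poly_rep N)) (dir_rep N) (fun b => b) (fun b e => e) (fun b => id_inj) (fun b => id_surj)).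
    exists (DirOf (dir_rep N) (Fob0 (poly_rep N)) (fun b => b) (fun b e => e) (fun b => id_inj) (fun b => id_surj)).
    split; intros X [b h]; reflexivity.
Qed.
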